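(* Let $\widetilde\nabla$ be the canonical snm-connection on $\mathbb R^3$ determined by $\mathsf C=\partial_z$, and let $M$ be the rotational surface $\psi(s,t)=(x(s)\cos t,x(s)\sin t,z(s))$, $s\in I$, $t\in\mathbb R$, with $I$ an open interval, $x>0$ and $x'^2+z'^2=1$. If the sectional curvature $K$ of $M$ with respect to $\widetilde\nabla$ is constant, then neither of the functions $2z'-xx'$ and $xz'-x'$ vanishes identically on $I$.
   Context: Let $\langle\cdot,\cdot\rangle$ be the Euclidean metric on $\mathbb R^3$ and $\widetilde\nabla^0$ its Levi-Civita connection (the ordinary directional derivative). Given a smooth vector field $\mathsf C$ on $\mathbb R^3$, the semi-symmetric non-metric connection (snm-connection) determined by $\mathsf C$ is $\widetilde\nabla_XY=\widetilde\nabla^0_XY+\langle \mathsf C,Y\rangle X$. Its curvature tensor is $\widetilde R(X,Y)Z=\widetilde\nabla_X\widetilde\nabla_YZ-\widetilde\nabla_Y\widetilde\nabla_XZ-\widetilde\nabla_{[X,Y]}Z$. For a surface $M$ immersed in $\mathbb R^3$, the induced connection is $\nabla_XY=(\widetilde\nabla_XY)^{\top}$ (tangential component), with curvature tensor $R$ defined by the same formula, and the sectional curvature of $M$ with respect to $\widetilde\nabla$ at $p$ is $K(p)=\frac12\big(\langle R(e_1,e_2)e_2,e_1\rangle+\langle R(e_2,e_1)e_1,e_2\rangle\big)$ for an orthonormal basis $\{e_1,e_2\}$ of $T_pM$. *)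

(* Defs.v *)
From Stdlib Require Import Reals.
From Coquelicot Require Import Coquelicot.
Open Scope R_scope.

Definition vec := (R * R * R)%type.
Definition mk (a b c : R) : vec := (a, b, c).
Definition v1 (v : vec) : R := fst (fst v).
Definition v2 (v : vec) : R := snd (fst v).
Definition v3 (v : vec) : R := snd v.
Definition vadd (u v : vec) : vec := mk (v1 u + v1 v) (v2 u + v2 v) (v3 u + v3 v).
Definition vscal (a : R) (v : vec) : vec := mk (a * v1 v) (a * v2 v) (a * v3 v).
Definition vsub (u v : vec) : vec := vadd u (vscal (-1) v).
Definition dot (u v : vec) : R := v1 u * v1 v + v2 u * v2 v + v3 u * v3 v.

Definition field := R -> R -> vec.

(** Partial derivatives (componentwise ordinary directional derivative,
    i.e. the Levi-Civita connection of R^3 along the coordinate directions). *)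
Definition dS (V : field) : field := fun s t =>
  mk (Derive (fun u => v1 (V u t)) s) (Derive (fun u => v2 (V u t)) s)
     (Derive (fun u => v3 (V u t)) s).
Definition dT (V : field) : field := fun s t =>
  mk (Derive (fun u => v1 (V s u)) t) (Derive (fun u => v2 (V s u)) t)
     (Derive (fun u => v3 (V s u)) t).

Definition psi (x z : R -> R) : field := fun s t => mk (x s * cos t) (x s * sin t) (z s).
Definition psi_s x z : field := dS (psi x z).
Definition psi_t x z : field := dT (psi x z).

(** Orthogonal projection of v onto span(a,b) (Gram-matrix formula). *)
Definition tproj (a b v : vec) : vec :=
  let E := dot a a in let F := dot a b in let G := dot b b in
  let D := E * G - F * F in
  vadd (vscal ((G * dot v a - F * dot v b) / D) a)
       (vscal ((E * dot v b - F * dot v a) / D) b).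

Definition Cz : vec := mk 0 0 1.

(** Induced connection of the snm-connection nabla~_X Y = D_X Y + <C,Y> X,
    along the coordinate fields psi_s, psi_t: nabla_X Y = (nabla~_X Y)^T. *)
Definition nab_s x z (V : field) : field := fun s t =>
  tproj (psi_s x z s t) (psi_t x z s t)
        (vadd (dS V s t) (vscal (dot Cz (V s t)) (psi_s x z s t))).
Definition nab_t x z (V : field) : field := fun s t =>
  tproj (psi_s x z s t) (psi_t x z s t)
        (vadd (dT V s t) (vscal (dot Cz (V s t)) (psi_t x z s t))).

(** Curvature of the induced connection on the coordinate fields
    ([psi_s, psi_t] = 0):  R(psi_s,psi_t)Z and R(psi_t,psi_s)Z. *)
Definition curvST x z (Zf : field) : field := fun s t =>
  vsub (nab_s x z (nab_t x z Zf) s t) (nab_t x z (nab_s x z Zf) s t).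
Definition curvTS x z (Zf : field) : field := fun s t =>
  vsub (nab_t x z (nab_s x z Zf) s t) (nab_s x z (nab_t x z Zf) s t).

(** Sectional curvature w.r.t. the orthonormal basis
    e1 = psi_s/|psi_s|, e2 = psi_t/|psi_t| (by tensoriality of R):
    K = 1/2 (<R(e1,e2)e2,e1> + <R(e2,e1)e1,e2>). *)
Definition sect_curv x z (s t : R) : R :=
  / 2 * (dot (curvST x z (psi_t x z) s t) (psi_s x z s t)
         + dot (curvTS x z (psi_s x z) s t) (psi_t x z s t))
  / (dot (psi_s x z s t) (psi_s x z s t) * dot (psi_t x z s t) (psi_t x z s t)).

Definition in_I (a b : Rbar) (s : R) : Prop := Rbar_lt a s /\ Rbar_lt s b.

Definition smooth_on (a b : Rbar) (f : R -> R) : Prop :=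
  forall (n : nat) (s : R), in_I a b s -> ex_derive (Derive_n f n) s.

(* Main.v *)
Require Import Defs.
From Stdlib Require Import Reals Lra Nsatz.
From Coquelicot Require Import Coquelicot.
Open Scope R_scope.

Ltac clear_neq := repeat match goal with H : ?A |- _ => lazymatch type of A with Prop => lazymatch A with @eq R _ _ => fail | _ => clear H end end end.
Ltac nz := repeat rewrite <- Rsqr_pow2 in *; unfold Rsqr in *; clear_neq; repeat match goal with |- context [?a ^ ?n] => let e := eval simpl in (a ^ n) in change (a ^ n) with e end; repeat match goal with H : context [?a ^ ?n] |- _ => let e := eval simpl in (a ^ n) in change (a ^ n) with e in H end; nsatz.

Definition Ps (x z : R -> R) u t := mk (Derive x u * cos t) (Derive x u * sin t) (Derive z u).
Definition Pt (x : R -> R) u t := mk (- (x u * sin t)) (x u * cos t) 0.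
Definition frame x z u t (f g : R) := vadd (vscal f (Ps x z u t)) (vscal g (Pt x u t)).

Lemma psi_s_eq x z u t : psi_s x z u t = Ps x z u t.
Proof.
  unfold psi_s, dS, psi, Ps, mk, v1, v2, v3; simpl.
  rewrite !Derive_scal_l. reflexivity.
Qed.

Lemma psi_t_eq x z u t : psi_t x z u t = Pt x u t.
Proof.
  unfold psi_t, dT, psi, Pt, mk, v1, v2, v3; simpl.
  rewrite !Derive_scal, Derive_const.
  rewrite (is_derive_unique cos t (- sin t)) by (auto_derive; auto; ring).
  rewrite (is_derive_unique sin t (cos t)) by (auto_derive; auto; ring).
  f_equal; f_equal; ring.
Qed.


Definition good (a b : Rbar) (x z : R -> R) := forall u, in_I a b u ->
  ex_derive x u /\ ex_derive (Derive x) u /\ ex_derive z u /\ ex_derive (Derive z) u /\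
  0 < x u /\ Derive x u ^ 2 + Derive z u ^ 2 = 1 /\
  Derive x u * Derive (Derive x) u + Derive z u * Derive (Derive z) u = 0.

Lemma loc_I a b s : in_I a b s -> locally s (in_I a b).
Proof.
  intros H. apply (open_and _ _ (open_Rbar_gt a) (open_Rbar_lt b)). exact H.
Qed.

Lemma tproj_frame x z s t v al be :
  Derive x s ^ 2 + Derive z s ^ 2 = 1 -> 0 < x s ->
  dot v (Ps x z s t) = al -> dot v (Pt x s t) = be * x s ^ 2 ->
  tproj (Ps x z s t) (Pt x s t) v = frame x z s t al be.
Proof.
  intros HE Hx Ha Hb. unfold tproj, frame. rewrite Ha, Hb.
  assert (c2 := sin2_cos2 t). unfold Rsqr in c2.
  assert (Eaa : dot (Ps x z s t) (Ps x z s t) = 1).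
  { unfold dot, Ps, mk, v1, v2, v3; simpl. nz. }
  assert (Eab : dot (Ps x z s t) (Pt x s t) = 0).
  { unfold dot, Ps, Pt, mk, v1, v2, v3; simpl. ring. }
  assert (Ebb : dot (Pt x s t) (Pt x s t) = x s ^ 2).
  { unfold dot, Pt, mk, v1, v2, v3; simpl. nz. }
  rewrite Eaa, Eab, Ebb. f_equal; f_equal; field; lra.
Qed.

Lemma dot_frame x z u t f g w : dot (frame x z u t f g) w =
  f * dot (Ps x z u t) w + g * dot (Pt x u t) w.
Proof. unfold dot, frame, vadd, vscal, mk, v1, v2, v3; simpl; ring. Qed.

Ltac eta_all := repeat match goal with
  | |- context [fun y : R => ?h y] => change (fun y : R => h y) with h
  end.

Lemma nab_s_frame a b x z V f g s t :
  good a b x z -> in_I a b s ->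
  (forall u t, in_I a b u -> V u t = frame x z u t (f u) (g u)) ->
  ex_derive f s -> ex_derive g s ->
  nab_s x z V s t = frame x z s t (Derive f s + f s * Derive z s)
                                  (Derive g s + g s * Derive x s / x s).
Proof.
  intros G HI HV Hf Hg.
  destruct (G s HI) as (Dx & Dx1 & Dz & Dz1 & Xp & HE & HE').
  unfold nab_s. rewrite !psi_s_eq, psi_t_eq.
  assert (L := loc_I a b s HI).
  assert (E1 : Derive (fun u => v1 (V u t)) s =
    Derive f s * (Derive x s * cos t) + f s * (Derive (Derive x) s * cos t)
    + Derive g s * (- (x s * sin t)) + g s * (- (Derive x s * sin t))).
  { rewrite (Derive_ext_loc _ (fun u => f u * (Derive x u * cos t) + g u * (- (x u * sin t)))).
    - apply is_derive_unique. auto_derive; [tauto|]. eta_all. ring.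
    - apply (filter_imp (in_I a b)); [|exact L]. intros u Hu. rewrite (HV u t Hu).
      unfold frame, Ps, Pt, vadd, vscal, mk, v1, v2, v3; simpl; ring. }
  assert (E2 : Derive (fun u => v2 (V u t)) s =
    Derive f s * (Derive x s * sin t) + f s * (Derive (Derive x) s * sin t)
    + Derive g s * (x s * cos t) + g s * (Derive x s * cos t)).
  { rewrite (Derive_ext_loc _ (fun u => f u * (Derive x u * sin t) + g u * (x u * cos t))).
    - apply is_derive_unique. auto_derive; [tauto|]. eta_all. ring.
    - apply (filter_imp (in_I a b)); [|exact L]. intros u Hu. rewrite (HV u t Hu).
      unfold frame, Ps, Pt, vadd, vscal, mk, v1, v2, v3; simpl; ring. }
  assert (E3 : Derive (fun u => v3 (V u t)) s =
    Derive f s * Derive z s + f s * Derive (Derive z) s).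
  { rewrite (Derive_ext_loc _ (fun u => f u * Derive z u)).
    - apply is_derive_unique. auto_derive; [tauto|]. eta_all. ring.
    - apply (filter_imp (in_I a b)); [|exact L]. intros u Hu. rewrite (HV u t Hu).
      unfold frame, Ps, Pt, vadd, vscal, mk, v1, v2, v3; simpl; ring. }
  apply tproj_frame; auto.
  - unfold dS. rewrite E1, E2, E3, (HV s t HI).
    assert (c2 := sin2_cos2 t). unfold Rsqr in c2.
    unfold dot, frame, Cz, Ps, Pt, vadd, vscal, mk, v1, v2, v3; simpl. nz.
  - unfold dS. rewrite E1, E2, E3, (HV s t HI).
    assert (c2 := sin2_cos2 t). unfold Rsqr in c2.
    assert (Xn : x s <> 0) by lra.
    replace ((Derive g s + g s * Derive x s / x s) * x s ^ 2) with
      (Derive g s * x s ^ 2 + g s * Derive x s * x s) by (field; auto).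
    unfold dot, frame, Cz, Ps, Pt, vadd, vscal, mk, v1, v2, v3; simpl. nz.
Qed.

Lemma nab_t_frame a b x z V f g s t :
  good a b x z -> in_I a b s ->
  (forall u t, in_I a b u -> V u t = frame x z u t (f u) (g u)) ->
  nab_t x z V s t = frame x z s t (- (g s * x s * Derive x s))
                                  (f s * Derive x s / x s + f s * Derive z s).
Proof.
  intros G HI HV.
  destruct (G s HI) as (Dx & Dx1 & Dz & Dz1 & Xp & HE & HE').
  unfold nab_t. rewrite !psi_s_eq, psi_t_eq.
  assert (E1 : Derive (fun u => v1 (V s u)) t =
    f s * (Derive x s * - sin t) + g s * (- (x s * cos t))).
  { rewrite (Derive_ext _ (fun u => f s * (Derive x s * cos u) + g s * (- (x s * sin u)))).
    - apply is_derive_unique. auto_derive; [tauto|]. ring.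
    - intros u. rewrite (HV s u HI).
      unfold frame, Ps, Pt, vadd, vscal, mk, v1, v2, v3; simpl; ring. }
  assert (E2 : Derive (fun u => v2 (V s u)) t =
    f s * (Derive x s * cos t) + g s * (- (x s * sin t))).
  { rewrite (Derive_ext _ (fun u => f s * (Derive x s * sin u) + g s * (x s * cos u))).
    - apply is_derive_unique. auto_derive; [tauto|]. ring.
    - intros u. rewrite (HV s u HI).
      unfold frame, Ps, Pt, vadd, vscal, mk, v1, v2, v3; simpl; ring. }
  assert (E3 : Derive (fun u => v3 (V s u)) t = 0).
  { rewrite (Derive_ext _ (fun u => f s * Derive z s)).
    - apply Derive_const.
    - intros u. rewrite (HV s u HI).
      unfold frame, Ps, Pt, vadd, vscal, mk, v1, v2, v3; simpl; ring. }
  apply tproj_frame; auto.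
  - unfold dT. rewrite E1, E2, E3, (HV s t HI).
    assert (c2 := sin2_cos2 t). unfold Rsqr in c2.
    unfold dot, frame, Cz, Ps, Pt, vadd, vscal, mk, v1, v2, v3; simpl. nz.
  - unfold dT. rewrite E1, E2, E3, (HV s t HI).
    assert (c2 := sin2_cos2 t). unfold Rsqr in c2.
    assert (Xn : x s <> 0) by lra.
    replace ((f s * Derive x s / x s + f s * Derive z s) * x s ^ 2) with
      (f s * Derive x s * x s + f s * Derive z s * x s ^ 2) by (field; auto).
    unfold dot, frame, Cz, Ps, Pt, vadd, vscal, mk, v1, v2, v3; simpl. nz.
Qed.

Lemma frame_eq x z u t f1 g1 f2 g2 : f1 = f2 -> g1 = g2 ->
  frame x z u t f1 g1 = frame x z u t f2 g2.
Proof. intros -> ->; reflexivity. Qed.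

Lemma dot_sub_Ps x z u t f1 g1 f2 g2 :
  Derive x u ^ 2 + Derive z u ^ 2 = 1 ->
  dot (vsub (frame x z u t f1 g1) (frame x z u t f2 g2)) (Ps x z u t) = f1 - f2.
Proof.
  intros HE. assert (c2 := sin2_cos2 t). unfold Rsqr in c2.
  unfold dot, vsub, frame, Ps, Pt, vadd, vscal, mk, v1, v2, v3; simpl. nz.
Qed.

Lemma dot_sub_Pt x z u t f1 g1 f2 g2 :
  dot (vsub (frame x z u t f1 g1) (frame x z u t f2 g2)) (Pt x u t) = (g1 - g2) * x u ^ 2.
Proof.
  assert (c2 := sin2_cos2 t). unfold Rsqr in c2.
  unfold dot, vsub, frame, Ps, Pt, vadd, vscal, mk, v1, v2, v3; simpl. nz.
Qed.

Lemma psi_s_frame x z u t : psi_s x z u t = frame x z u t 1 0.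
Proof. rewrite psi_s_eq. unfold frame, Ps, Pt, vadd, vscal, mk, v1, v2, v3; simpl. f_equal; f_equal; ring. Qed.
Lemma psi_t_frame x z u t : psi_t x z u t = frame x z u t 0 1.
Proof. rewrite psi_t_eq. unfold frame, Ps, Pt, vadd, vscal, mk, v1, v2, v3; simpl. f_equal; f_equal; ring. Qed.

Definition Kf x z s := - Derive (Derive x) s / x s - Derive x s * Derive z s / (2 * x s)
  + Derive z s ^ 2 / 2 - Derive (Derive z) s / 2.

Lemma sect_formula a b x z s t : good a b x z -> in_I a b s -> sect_curv x z s t = Kf x z s.
Proof.
  intros G HI.
  destruct (G s HI) as (Dx & Dx1 & Dz & Dz1 & Xp & HE & HE').
  assert (Xn : x s <> 0) by lra.
  assert (Ntt : forall u t, in_I a b u -> nab_t x z (psi_t x z) u t =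
            frame x z u t (- (x u * Derive x u)) 0).
  { intros u t' Hu. rewrite (nab_t_frame a b x z _ (fun _ => 0) (fun _ => 1)); auto.
    - apply frame_eq; cbv beta; unfold Rdiv; ring.
    - intros; apply psi_t_frame. }
  assert (Nst : forall u t, in_I a b u -> nab_s x z (psi_t x z) u t =
            frame x z u t 0 (Derive x u / x u)).
  { intros u t' Hu. rewrite (nab_s_frame a b x z _ (fun _ => 0) (fun _ => 1)); auto.
    - apply frame_eq; rewrite ?Derive_const; cbv beta; unfold Rdiv; ring.
    - intros; apply psi_t_frame.
    - auto_derive; auto.
    - auto_derive; auto. }
  assert (Nss : forall u t, in_I a b u -> nab_s x z (psi_s x z) u t =
            frame x z u t (Derive z u) 0).
  { intros u t' Hu. rewrite (nab_s_frame a b x z _ (fun _ => 1) (fun _ => 0)); auto.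
    - apply frame_eq; rewrite ?Derive_const; cbv beta; unfold Rdiv; ring.
    - intros; apply psi_s_frame.
    - auto_derive; auto.
    - auto_derive; auto. }
  assert (Nts : forall u t, in_I a b u -> nab_t x z (psi_s x z) u t =
            frame x z u t 0 (Derive x u / x u + Derive z u)).
  { intros u t' Hu. rewrite (nab_t_frame a b x z _ (fun _ => 1) (fun _ => 0)); auto.
    - apply frame_eq; cbv beta; unfold Rdiv; ring.
    - intros; apply psi_s_frame. }
  assert (D1 : Derive (fun u => - (x u * Derive x u)) s =
     - (Derive x s * Derive x s + x s * Derive (Derive x) s)).
  { apply is_derive_unique. auto_derive; [tauto|]. eta_all. ring. }
  assert (D2 : Derive (fun u => Derive x u / x u + Derive z u) s =
     (Derive (Derive x) s * x s - Derive x s * Derive x s) / (x s ^ 2) + Derive (Derive z) s).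
  { apply is_derive_unique. auto_derive; [repeat split; auto|]. eta_all. field. auto. }
  unfold sect_curv, curvST, curvTS.
  rewrite (nab_s_frame a b x z _ (fun u => - (x u * Derive x u)) (fun _ => 0)); auto;
    [| auto_derive; repeat split; auto | auto_derive; auto].
  rewrite (nab_t_frame a b x z _ (fun _ => 0) (fun u => Derive x u / x u)); auto.
  rewrite (nab_t_frame a b x z _ (fun u => Derive z u) (fun _ => 0)); auto.
  rewrite (nab_s_frame a b x z _ (fun _ => 0) (fun u => Derive x u / x u + Derive z u)); auto;
    [| auto_derive; auto | auto_derive; repeat split; auto; lra].
  rewrite psi_s_eq, psi_t_eq, dot_sub_Ps, dot_sub_Pt by auto.
  rewrite D1, D2, ?Derive_const.
  assert (c2 := sin2_cos2 t). unfold Rsqr in c2.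
  assert (EPs : dot (Ps x z s t) (Ps x z s t) = 1).
  { unfold dot, Ps, mk, v1, v2, v3; simpl. nz. }
  assert (EPt : dot (Pt x s t) (Pt x s t) = x s ^ 2).
  { unfold dot, Pt, mk, v1, v2, v3; simpl. nz. }
  rewrite EPs, EPt. unfold Kf.
  field. auto.
Qed.

Lemma I_convex a b p q c : in_I a b p -> in_I a b q -> p <= c <= q -> in_I a b c.
Proof.
  intros [Hp1 Hp2] [Hq1 Hq2] [H1 H2]. unfold in_I. split.
  - exact (Rbar_lt_le_trans a (Finite p) (Finite c) Hp1 H1).
  - exact (Rbar_le_lt_trans (Finite c) (Finite q) b H2 Hq2).
Qed.

Lemma I_nonempty a b : Rbar_lt a b -> exists s, in_I a b s.
Proof.
  destruct a as [a| |], b as [b| |]; simpl; intros H; try contradiction.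
  - exists ((a+b)/2). split; simpl; lra.
  - exists (a+1). split; simpl; lra || auto.
  - exists (b-1). split; simpl; lra || auto.
  - exists 0. split; simpl; auto.
Qed.

Lemma three_points a b : Rbar_lt a b -> exists p q r, in_I a b p /\ in_I a b q /\ in_I a b r /\ p < q < r.
Proof.
  intros H. destruct (I_nonempty a b H) as [s Hs].
  destruct (loc_I a b s Hs) as [eps He].
  assert (B : forall d, 0 <= d < eps -> in_I a b (s + d)).
  { intros d Hd. apply He. unfold ball; simpl. unfold AbsRing_ball, abs, minus, plus, opp; simpl.
    replace (s + d + - s) with d by ring. rewrite Rabs_pos_eq; lra. }
  assert (Ep := cond_pos eps).
  exists s, (s + eps/4), (s + eps/2). repeat split.
  - exact (proj1 Hs). - exact (proj2 Hs).
  - apply B; lra. - apply B; lra. - apply B; lra. - apply B; lra. - lra. - lra.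
Qed.

Lemma x_inj a b x p q : (forall u, in_I a b u -> ex_derive x u /\ Derive x u <> 0) ->
  in_I a b p -> in_I a b q -> p < q -> x p <> x q.
Proof.
  intros Hd Hp Hq Hpq Heq.
  destruct (MVT_gen x p q (Derive x)) as [c [Hc Ec]].
  - intros y Hy. rewrite Rmin_left, Rmax_right in Hy by lra.
    apply Derive_correct. apply Hd. apply (I_convex a b p q); auto; lra.
  - intros y Hy. rewrite Rmin_left, Rmax_right in Hy by lra.
    apply continuity_pt_filterlim. apply (@ex_derive_continuous R_AbsRing R_NormedModule). apply Hd.
    apply (I_convex a b p q); auto; lra.
  - rewrite Rmin_left, Rmax_right in Hc by lra.
    assert (Ic : in_I a b c) by (apply (I_convex a b p q); auto; lra).
    destruct (Hd c Ic) as [_ Hn]. rewrite Heq in Ec.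
    assert (Derive x c * (q - p) = 0) by lra.
    apply Rmult_integral in H. destruct H; [contradiction|lra].
Qed.

Lemma good_of a b x z :
  smooth_on a b x -> smooth_on a b z ->
  (forall s, in_I a b s -> 0 < x s) ->
  (forall s, in_I a b s -> (Derive x s) ^ 2 + (Derive z s) ^ 2 = 1) ->
  good a b x z.
Proof.
  intros Sx Sz Xp HE u Hu.
  assert (Dx : ex_derive x u) by exact (Sx 0%nat u Hu).
  assert (Dx1 : ex_derive (Derive x) u) by exact (Sx 1%nat u Hu).
  assert (Dz : ex_derive z u) by exact (Sz 0%nat u Hu).
  assert (Dz1 : ex_derive (Derive z) u) by exact (Sz 1%nat u Hu).
  repeat split; auto.
  assert (H1 : is_derive (fun v => Derive x v ^ 2 + Derive z v ^ 2) u
     (2 * Derive x u * Derive (Derive x) u + 2 * Derive z u * Derive (Derive z) u)).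
  { auto_derive; [tauto|]. eta_all. ring. }
  assert (H2 : is_derive (fun v => Derive x v ^ 2 + Derive z v ^ 2) u 0).
  { apply (is_derive_ext_loc (fun _ => 1)).
    - apply (filter_imp (in_I a b)); [|exact (loc_I a b u Hu)]. intros v Hv. symmetry; auto.
    - auto_derive; auto. }
  apply is_derive_unique in H1. apply is_derive_unique in H2. lra.
Qed.

Lemma caseA_val a b x z s : good a b x z -> in_I a b s ->
  (forall s, in_I a b s -> 2 * Derive z s - x s * Derive x s = 0) ->
  Derive x s <> 0 /\ Kf x z s = (x s ^ 2 - 2) / (2 * (4 + x s ^ 2)).
Proof.
  intros G HI HA.
  destruct (G s HI) as (Dx & Dx1 & Dz & Dz1 & Xp & HE & HE').
  assert (Z1 : Derive z s = x s * Derive x s / 2) by (specialize (HA s HI); lra).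
  assert (Z2 : Derive (Derive z) s = (Derive x s * Derive x s + x s * Derive (Derive x) s) / 2).
  { rewrite (Derive_ext_loc _ (fun u => x u * Derive x u / 2)).
    - apply is_derive_unique. auto_derive; [tauto|]. eta_all. field.
    - apply (filter_imp (in_I a b)); [|exact (loc_I a b s HI)]. intros u Hu.
      specialize (HA u Hu); lra. }
  rewrite Z1 in HE. rewrite Z1, Z2 in HE'.
  set (X := x s) in *. set (X1 := Derive x s) in *. set (X2 := Derive (Derive x) s) in *.
  assert (hE : X1 ^ 2 * (4 + X ^ 2) = 4) by (field_simplify in HE; lra).
  assert (X1n : X1 <> 0).
  { intro h. rewrite h in hE. lra. }
  assert (hE2 : X2 * (4 + X ^ 2) + X * X1 ^ 2 = 0).
  { assert (h : X1 * (X2 * (4 + X ^ 2) + X * X1 ^ 2) = 0).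
    { assert (h : X1 * (X2 * (4 + X ^ 2) + X * X1 ^ 2) = 4 * (X1 * X2 + X * X1 / 2 * ((X1 * X1 + X * X2) / 2))) by field. rewrite HE', Rmult_0_r in h. exact h. }
    apply Rmult_integral in h. destruct h; [contradiction|auto]. }
  split; auto.
  unfold Kf. fold X X1 X2. rewrite Z1, Z2. fold X X1 X2.
  assert (X <> 0) by lra. assert (4 + X ^ 2 <> 0) by nra.
  field_simplify_eq; auto. clear HE HE' Z1 Z2. clearbody X X1 X2. nz.
Qed.

Lemma caseB_val a b x z s : good a b x z -> in_I a b s ->
  (forall s, in_I a b s -> x s * Derive z s - Derive x s = 0) ->
  Derive x s <> 0 /\ Kf x z s = (x s ^ 2 - 2) / (2 * (1 + x s ^ 2) ^ 2).
Proof.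
  intros G HI HA.
  destruct (G s HI) as (Dx & Dx1 & Dz & Dz1 & Xp & HE & HE').
  assert (Xn : x s <> 0) by lra.
  assert (Z1 : Derive z s = Derive x s / x s) by (specialize (HA s HI); replace (Derive x s) with (x s * Derive z s) by lra; field; auto).
  assert (Z2 : Derive (Derive z) s = (Derive (Derive x) s * x s - Derive x s * Derive x s) / x s ^ 2).
  { rewrite (Derive_ext_loc _ (fun u => Derive x u / x u)).
    - apply is_derive_unique. auto_derive; [repeat split; auto|]. eta_all. field. auto.
    - apply (filter_imp (in_I a b)); [|exact (loc_I a b s HI)]. intros u Hu.
      specialize (HA u Hu). assert (0 < x u) by (apply G; auto).
      replace (Derive x u) with (x u * Derive z u) by lra. field; lra. }
  rewrite Z1 in HE. rewrite Z1, Z2 in HE'.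
  set (X := x s) in *. set (X1 := Derive x s) in *. set (X2 := Derive (Derive x) s) in *.
  assert (hE : X1 ^ 2 * (X ^ 2 + 1) = X ^ 2).
  { assert (h : X1 ^ 2 * (X ^ 2 + 1) - X ^ 2 = X ^ 2 * (X1 ^ 2 + (X1 / X) ^ 2 - 1)) by (field; auto).
    rewrite HE in h. lra. }
  assert (X1n : X1 <> 0).
  { intro h. rewrite h in hE. nra. }
  assert (hE2 : X2 * X ^ 3 + X2 * X - X1 ^ 2 = 0).
  { assert (h : X1 * (X2 * X ^ 3 + X2 * X - X1 ^ 2) = X ^ 3 *
       (X1 * X2 + X1 / X * ((X2 * X - X1 * X1) / X ^ 2))) by (field; auto).
    rewrite HE', Rmult_0_r in h.
    apply Rmult_integral in h. destruct h; [contradiction|auto]. }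
  split; auto.
  unfold Kf. fold X X1 X2. rewrite Z1, Z2. fold X X1 X2.
  assert (1 + X ^ 2 <> 0) by nra.
  field_simplify_eq; auto. clear HE HE' Z1 Z2. clearbody X X1 X2. nz.
Qed.

Theorem proposition4p2 (a b : Rbar) (x z : R -> R) :
  Rbar_lt a b ->
  smooth_on a b x -> smooth_on a b z ->
  (forall s, in_I a b s -> 0 < x s) ->
  (forall s, in_I a b s -> (Derive x s) ^ 2 + (Derive z s) ^ 2 = 1) ->
  (exists k : R, forall s t : R, in_I a b s -> sect_curv x z s t = k) ->
  ~ (forall s, in_I a b s -> 2 * Derive z s - x s * Derive x s = 0) /\
  ~ (forall s, in_I a b s -> x s * Derive z s - Derive x s = 0).
Proof.
  intros Hab Sx Sz Xp HE [k Hk].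
  assert (G := good_of a b x z Sx Sz Xp HE).
  assert (Kc : forall s, in_I a b s -> Kf x z s = k).
  { intros s Hs. rewrite <- (sect_formula a b x z s 0 G Hs). auto. }
  destruct (three_points a b Hab) as (p & q & r & Hp & Hq & Hr & Hpq & Hqr).
  split.
  - intros HA.
    assert (Hd : forall u, in_I a b u -> ex_derive x u /\ Derive x u <> 0).
    { intros u Hu. split; [apply G; auto | apply (caseA_val a b x z u G Hu HA)]. }
    assert (Np := x_inj a b x p q Hd Hp Hq Hpq).
    destruct (caseA_val a b x z p G Hp HA) as [_ Kp].
    destruct (caseA_val a b x z q G Hq HA) as [_ Kq].
    rewrite (Kc p Hp) in Kp. rewrite (Kc q Hq) in Kq.
    assert (P1 := Xp p Hp). assert (P2 := Xp q Hq).
    assert (e : (x q ^ 2 - 2) * (4 + x p ^ 2) = (x p ^ 2 - 2) * (4 + x q ^ 2)).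
    { assert (k * (2 * (4 + x p ^ 2) * (4 + x q ^ 2)) = (x p ^ 2 - 2) * (4 + x q ^ 2))
        by (rewrite Kp; field; nra).
      assert (k * (2 * (4 + x p ^ 2) * (4 + x q ^ 2)) = (x q ^ 2 - 2) * (4 + x p ^ 2))
        by (rewrite Kq; field; nra).
      lra. }
    apply Np. nra.
  - intros HB.
    assert (Hd : forall u, in_I a b u -> ex_derive x u /\ Derive x u <> 0).
    { intros u Hu. split; [apply G; auto | apply (caseB_val a b x z u G Hu HB)]. }
    assert (N1 := x_inj a b x p q Hd Hp Hq Hpq).
    assert (N2 := x_inj a b x q r Hd Hq Hr Hqr).
    assert (N3 := x_inj a b x p r Hd Hp Hr ltac:(lra)).
    destruct (caseB_val a b x z p G Hp HB) as [_ Kp].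
    destruct (caseB_val a b x z q G Hq HB) as [_ Kq].
    destruct (caseB_val a b x z r G Hr HB) as [_ Kr].
    rewrite (Kc p Hp) in Kp. rewrite (Kc q Hq) in Kq. rewrite (Kc r Hr) in Kr.
    assert (P1 := Xp p Hp). assert (P2 := Xp q Hq). assert (P3 := Xp r Hr).
    set (wp := 1 + x p ^ 2) in *. set (wq := 1 + x q ^ 2) in *. set (wr := 1 + x r ^ 2) in *.
    assert (Ep : x p ^ 2 - 2 = wp - 3) by (unfold wp; ring).
    assert (Eq : x q ^ 2 - 2 = wq - 3) by (unfold wq; ring).
    assert (Er : x r ^ 2 - 2 = wr - 3) by (unfold wr; ring).
    rewrite Ep in Kp. rewrite Eq in Kq. rewrite Er in Kr.
    assert (wp > 1) by (unfold wp; nra). assert (wq > 1) by (unfold wq; nra).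
    assert (wr > 1) by (unfold wr; nra).
    assert (Dpq : wq - wp <> 0).
    { intro h. apply N1. assert (x p ^ 2 = x q ^ 2) by (unfold wp, wq in h; lra). nra. }
    assert (Dpr : wr - wp <> 0).
    { intro h. apply N3. assert (x p ^ 2 = x r ^ 2) by (unfold wp, wr in h; lra). nra. }
    assert (Dqr : wr - wq <> 0).
    { intro h. apply N2. assert (x q ^ 2 = x r ^ 2) by (unfold wr, wq in h; lra). nra. }
    clearbody wp wq wr.
    assert (e1 : (wp - 3) * wq ^ 2 = (wq - 3) * wp ^ 2).
    { assert (k * (2 * wp ^ 2 * wq ^ 2) = (wp - 3) * wq ^ 2) by (rewrite Kp; field; lra).
      assert (k * (2 * wp ^ 2 * wq ^ 2) = (wq - 3) * wp ^ 2) by (rewrite Kq; field; lra).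
      lra. }
    assert (e2 : (wp - 3) * wr ^ 2 = (wr - 3) * wp ^ 2).
    { assert (k * (2 * wp ^ 2 * wr ^ 2) = (wp - 3) * wr ^ 2) by (rewrite Kp; field; lra).
      assert (k * (2 * wp ^ 2 * wr ^ 2) = (wr - 3) * wp ^ 2) by (rewrite Kr; field; lra).
      lra. }
    assert (f1 : wp * wq = 3 * (wp + wq)).
    { assert (h : (wq - wp) * (wp * wq - 3 * (wp + wq)) = 0) by nra.
      apply Rmult_integral in h. destruct h; [contradiction|lra]. }
    assert (f2 : wp * wr = 3 * (wp + wr)).
    { assert (h : (wr - wp) * (wp * wr - 3 * (wp + wr)) = 0) by nra.
      apply Rmult_integral in h. destruct h; [contradiction|lra]. }
    assert (h : (wr - wq) * (wp - 3) = 0) by nra.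
    apply Rmult_integral in h. destruct h as [h|h]; [contradiction|].
    assert (wp = 3) by lra. subst wp. lra.
Qed.
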